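(* Let $\{g_n\}_{n=1}^\infty$ be a nested sequence of geodesics in the unit disk $\mathbb{D}$ such that any two adjacent geodesics $g_n,g_{n+1}$ share an ideal endpoint and no three of the geodesics share an ideal endpoint. Fix $P_1\in g_1$ and let $h$ be the piecewise horocyclic path starting at $P_1$ that is the concatenation of horocyclic arcs $h_n$, where $h_n$ lies in the wedge $W_n$ between $g_n$ and $g_{n+1}$, is orthogonal to both, lies on a horocycle centered at the common endpoint of $g_n$ and $g_{n+1}$, and starts at the endpoint of $h_{n-1}$ on $g_n$ (with $h_1$ starting at $P_1$). Then the sequence $\{g_n\}$ accumulates to a single point of $S^1$ if and only if $h$ has infinite hyperbolic length.
   Context: Nested means that for each $n\ge2$ the geodesics $g_{n-1}$ and $g_{n+1}$ lie in different components of $\mathbb{D}\setminus g_n$. The wedge $W_n$ is the region between $g_n$ and $g_{n+1}$; its vertex is their common ideal endpoint. A nested sequence either accumulates to a single point of $S^1$ or to a geodesic in $\mathbb{D}$. *)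

(* Defs.v *)
From Stdlib Require Import Reals.
From Coquelicot Require Import Coquelicot.
Open Scope R_scope.

Definition in_disk (z : C) : Prop := Cmod z < 1.
Definition on_circle (z : C) : Prop := Cmod z = 1.

(* For ideal points a <> b on S^1, the geodesic with endpoints a, b is the
   intersection of D with the generalized circle
     { z | alpha (1 + |z|^2) - 2 Re (z * conj w) = 0 },
   alpha = - Im (a * conj b),  w = i (a - b).
   (This is the circle through a, b orthogonal to S^1, or the diameter through
   a, b when a = -b; (alpha, w) <> 0 whenever a <> b.) *)
Definition geo_alpha (a b : C) : R := - Im (Cmult a (Cconj b)).
Definition geo_w (a b : C) : C := Cmult (0%R, 1%R) (Cminus a b).
Definition geoF (a b z : C) : R :=
  geo_alpha a b * (1 + (Cmod z) ^ 2) - 2 * Re (Cmult z (Cconj (geo_w a b))).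

Definition geod (a b : C) (z : C) : Prop := in_disk z /\ geoF a b z = 0.

Definition side_pos (a b : C) (z : C) : Prop := in_disk z /\ geoF a b z > 0.
Definition side_neg (a b : C) (z : C) : Prop := in_disk z /\ geoF a b z < 0.

Definition is_endpoint (a b p : C) : Prop := p = a \/ p = b.

(* Horocycle centered at the ideal point v through P in D: the Euclidean circle
   tangent to S^1 at v through P, with center (1 - rho) v and radius rho. *)
Definition horo_radius (v P : C) : R :=
  (Cmod (Cminus P v)) ^ 2 / (2 * (1 - Re (Cmult P (Cconj v)))).
Definition horo_param (v : C) (rho : R) (t : R) : C :=
  Cplus (Cmult (RtoC (1 - rho)) v) (Cmult (RtoC rho) (Cmult v (cos t, sin t))).
(* t = 0 corresponds to the center v itself; t in (0, 2 pi) parametrizes the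
   horocycle inside D. *)

Definition hyp_length (gamma : R -> C) (s t : R) : R :=
  RInt (fun u =>
          2 * sqrt ((Derive (fun r => fst (gamma r)) u) ^ 2
                    + (Derive (fun r => snd (gamma r)) u) ^ 2)
            / (1 - (Cmod (gamma u)) ^ 2)) s t.

(* L is the hyperbolic length of the horocyclic arc, on the horocycle centered
   at v through P, going from P to Q without passing through v. *)
Definition horo_arc_length (v P Q : C) (L : R) : Prop :=
  let rho := horo_radius v P in
  exists t1 t2 : R,
    0 < t1 < 2 * PI /\ 0 < t2 < 2 * PI /\
    P = horo_param v rho t1 /\ Q = horo_param v rho t2 /\
    L = Rabs (hyp_length (horo_param v rho) t1 t2).

Definition on_horocycle (v P Q : C) : Prop :=
  in_disk Q /\
  Cmod (Cminus Q (Cmult (RtoC (1 - horo_radius v P)) v)) = horo_radius v P.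

(* The sequence of geodesics n |-> g(a n, b n) converges to the single point
   zeta of S^1: the geodesics converge to zeta (uniformly, i.e. in the
   Hausdorff sense). *)
Definition converges_to_ideal_point (a b : nat -> C) : Prop :=
  exists zeta : C, on_circle zeta /\
    forall eps : R, eps > 0 -> exists N : nat, forall n : nat, (N <= n)%nat ->
      forall z : C, geod (a n) (b n) z -> Cmod (Cminus z zeta) < eps.

(* Main.v *)
Require Import Defs.
From Stdlib Require Import Reals Lra Lia Psatz Classical.
From Coquelicot Require Import Coquelicot.
Open Scope R_scope.

Definition n2 (z:C) : R := fst z ^ 2 + snd z ^ 2.
Definition dd2 (z w : C) : R := (fst z - fst w) ^ 2 + (snd z - snd w) ^ 2.
Definition gf (a b z : C) : R :=
  (fst a * snd b - snd a * fst b) * (1 + n2 z)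
  - 2 * (snd z * (fst a - fst b) - fst z * (snd a - snd b)).

Lemma n2_ge0 z : 0 <= n2 z.
Proof. unfold n2; apply Rplus_le_le_0_compat; apply pow2_ge_0. Qed.
Lemma dd2_ge0 z w : 0 <= dd2 z w.
Proof. unfold dd2; apply Rplus_le_le_0_compat; apply pow2_ge_0. Qed.

Lemma Cmod_sq z : Cmod z ^ 2 = n2 z.
Proof. unfold Cmod. rewrite pow2_sqrt; [reflexivity| apply n2_ge0]. Qed.

Lemma Cmod_n2 z : Cmod z = sqrt (n2 z).
Proof. reflexivity. Qed.

Lemma Cmod_minus z w : Cmod (Cminus z w) = sqrt (dd2 z w).
Proof. unfold Cmod, dd2. destruct z, w. simpl. f_equal; try ring. Qed.

Lemma circle_n2 a : on_circle a -> n2 a = 1.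
Proof. unfold on_circle. intro H. rewrite <- Cmod_sq, H. ring. Qed.

Lemma disk_n2 z : in_disk z -> n2 z < 1.
Proof. unfold in_disk. intro H. rewrite <- Cmod_sq.
  assert (0 <= Cmod z) by apply Cmod_ge_0. nra. Qed.

Lemma n2_disk z : n2 z < 1 -> in_disk z.
Proof. unfold in_disk, Cmod. intro H. rewrite <- sqrt_1. apply sqrt_lt_1_alt.
  split; [apply n2_ge0| exact H]. Qed.

Lemma geoF_gf a b z : geoF a b z = gf a b z.
Proof. unfold geoF, geo_alpha, geo_w. rewrite Cmod_sq. destruct a, b, z.
  unfold gf, n2. simpl. ring. Qed.

Lemma gf_swap a b z : gf b a z = - gf a b z.
Proof. unfold gf. ring. Qed.

Lemma hp_fst v r t : fst (horo_param v r t) = (1-r)*fst v + r*(fst v * cos t - snd v * sin t).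
Proof. destruct v. unfold horo_param. simpl. ring. Qed.
Lemma hp_snd v r t : snd (horo_param v r t) = (1-r)*snd v + r*(fst v * sin t + snd v * cos t).
Proof. destruct v. unfold horo_param. simpl. ring. Qed.

Lemma hp_n2 v r t : n2 v = 1 ->
  n2 (horo_param v r t) = (1-r)^2 + r^2 + 2*r*(1-r)*cos t.
Proof. intro Hv. unfold n2 in *. rewrite hp_fst, hp_snd.
  assert (E: ((1 - r) * fst v + r * (fst v * cos t - snd v * sin t)) ^ 2 +
    ((1 - r) * snd v + r * (fst v * sin t + snd v * cos t)) ^ 2
    = (fst v ^2 + snd v ^2) * ((1-r)^2 + r^2 * (sin t ^2 + cos t ^2) + 2*r*(1-r)*cos t)) by ring.
  rewrite E, Hv. rewrite <- !Rsqr_pow2, sin2_cos2. ring. Qed.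

Lemma hp_dd2 v r t : n2 v = 1 ->
  dd2 (horo_param v r t) v = 2*r^2*(1 - cos t).
Proof. intro Hv. unfold n2, dd2 in *. rewrite hp_fst, hp_snd.
  assert (E: ((1 - r) * fst v + r * (fst v * cos t - snd v * sin t) - fst v) ^ 2 +
    ((1 - r) * snd v + r * (fst v * sin t + snd v * cos t) - snd v) ^ 2
    = (fst v ^2 + snd v ^2) * (r^2 * (sin t ^2 + cos t ^2 + 1) - 2*r^2*cos t)) by ring.
  rewrite E, Hv. rewrite <- !Rsqr_pow2, sin2_cos2. ring. Qed.

Definition imr (z v : C) : R := snd z * fst v - fst z * snd v.
Definition rer (z v : C) : R := fst z * fst v + snd z * snd v.

Lemma hp_imr v r t : n2 v = 1 -> imr (horo_param v r t) v = r * sin t.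
Proof. intro Hv. unfold n2, imr in *. rewrite hp_fst, hp_snd.
  assert (E: ((1 - r) * snd v + r * (fst v * sin t + snd v * cos t)) * fst v -
    ((1 - r) * fst v + r * (fst v * cos t - snd v * sin t)) * snd v
    = (fst v ^2 + snd v ^2) * (r * sin t)) by ring.
  rewrite E, Hv. ring. Qed.

Lemma one_m_cos_pos t : 0 < t < 2*PI -> 0 < 1 - cos t.
Proof. intro H. replace t with (2*(t/2)) by field. rewrite cos_2a_sin.
  assert (0 < sin (t/2)) by (apply sin_gt_0; lra). nra. Qed.

Lemma horo_radius_bounds v P : n2 v = 1 -> n2 P < 1 ->
  0 < horo_radius v P < 1.
Proof. intros Hv HP. unfold horo_radius. rewrite Cmod_minus.
  rewrite pow2_sqrt by apply dd2_ge0.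
  assert (E: dd2 P v = n2 P + n2 v - 2 * (fst P * fst v + snd P * snd v)).
  { unfold dd2, n2. ring. }
  assert (ER: Re (Cmult P (Cconj v)) = fst P * fst v + snd P * snd v).
  { destruct P, v. simpl. ring. }
  rewrite ER.
  assert (Hd: 0 < dd2 P v).
  { destruct (Rle_lt_or_eq_dec 0 (dd2 P v) (dd2_ge0 _ _)) as [h|h]; auto.
    exfalso. unfold dd2, n2 in *. 
    assert (h1: (fst P - fst v)^2 = 0) by (pose proof (pow2_ge_0 (fst P - fst v)); pose proof (pow2_ge_0 (snd P - snd v)); lra).
    assert (h2: (snd P - snd v)^2 = 0) by (pose proof (pow2_ge_0 (fst P - fst v)); pose proof (pow2_ge_0 (snd P - snd v)); lra).
    assert (H: fst P = fst v) by nra. assert (H0: snd P = snd v) by nra.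
    rewrite H, H0 in HP. lra. }
  split.
  - apply Rdiv_lt_0_compat; lra.
  - apply Rlt_div_l; lra.
Qed.

Lemma Derive_hp_fst v r u :
  Derive (fun s => fst (horo_param v r s)) u = r * (- fst v * sin u - snd v * cos u).
Proof.
  apply is_derive_unique.
  apply is_derive_ext with (f := fun s => (1-r)*fst v + r*(fst v * cos s - snd v * sin s)).
  { intro; rewrite hp_fst; reflexivity. }
  auto_derive; auto. ring.
Qed.

Lemma Derive_hp_snd v r u :
  Derive (fun s => snd (horo_param v r s)) u = r * (fst v * cos u - snd v * sin u).
Proof.
  apply is_derive_unique.
  apply is_derive_ext with (f := fun s => (1-r)*snd v + r*(fst v * sin s + snd v * cos s)).
  { intro; rewrite hp_snd; reflexivity. }
  auto_derive; auto. ring.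
Qed.

Definition Gh (r t : R) : R := - sin t / ((1 - r) * (1 - cos t)).

Lemma hyp_length_hp v r t1 t2 : n2 v = 1 -> 0 < r < 1 ->
  0 < t1 < 2*PI -> 0 < t2 < 2*PI ->
  hyp_length (horo_param v r) t1 t2 = Gh r t2 - Gh r t1.
Proof.
  intros Hv Hr H1 H2. unfold hyp_length.
  assert (Hin: forall x, Rmin t1 t2 <= x <= Rmax t1 t2 -> 0 < x < 2*PI).
  { intros x Hx. destruct Hx as [Ha Hb].
    assert (Rmin t1 t2 > 0) by (apply Rmin_glb_lt; lra).
    assert (Rmax t1 t2 < 2*PI) by (apply Rmax_lub_lt; lra). lra. }
  rewrite (RInt_ext _ (fun u => 1 / ((1 - r) * (1 - cos u)))).
  2:{ intros x Hx. assert (Hx': 0 < x < 2*PI) by (apply Hin; lra).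
      pose proof (one_m_cos_pos x Hx').
      rewrite Derive_hp_fst, Derive_hp_snd. rewrite Cmod_sq, hp_n2 by exact Hv.
      assert (E: (r * (- fst v * sin x - snd v * cos x)) ^ 2 + (r * (fst v * cos x - snd v * sin x)) ^ 2
                 = r^2 * ((fst v ^2 + snd v ^2) * (sin x ^2 + cos x ^2))) by ring.
      rewrite E. unfold n2 in Hv. rewrite Hv. rewrite <- !Rsqr_pow2, sin2_cos2.
      rewrite Rmult_1_l, Rmult_1_r, Rsqr_pow2, sqrt_pow2 by lra.
      replace (1 - ((1 - r)² + r ^ 2 + 2 * r * (1 - r) * cos x)) with (2*r*(1-r)*(1-cos x)) by (unfold Rsqr; ring).
      assert (E2 : 2*r / (2*r*(1-r)*(1-cos x)) = 1/((1-r)*(1-cos x))) by (field; split; lra).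
      exact E2. }
  assert (HI: is_RInt (fun u => 1/((1-r)*(1-cos u))) t1 t2 (minus (Gh r t2) (Gh r t1))).
  2:{ rewrite (is_RInt_unique _ _ _ _ HI). reflexivity. }
  apply (is_RInt_derive (Gh r) (fun u => 1/((1-r)*(1-cos u)))).
  - intros x Hx. pose proof (one_m_cos_pos x (Hin x Hx)). unfold Gh.
    auto_derive.
    + intro h. apply Rmult_integral in h. lra.
    + assert (Hs: sin x * sin x = 1 - cos x * cos x) by (pose proof (sin2_cos2 x); unfold Rsqr in *; lra).
      transitivity ((cos x * cos x + sin x * sin x - cos x) / ((1-r)*(1-cos x)*(1-cos x))).
      * field. lra.
      * rewrite Hs. field. lra.
  - intros x Hx. pose proof (one_m_cos_pos x (Hin x Hx)).
    apply (ex_derive_continuous (K:=R_AbsRing) (V:=R_NormedModule)). auto_derive.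
    intro h. apply Rmult_integral in h. lra.
Qed.

Lemma one_m_cos_F t : 0 < 1 - cos t ->
  1 - cos t = 2 / (1 + (- sin t / (1 - cos t))^2).
Proof. intro H. pose proof (sin2_cos2 t) as S. unfold Rsqr in S.
  assert (E: 1 + (- sin t / (1 - cos t))^2 = 2 / (1 - cos t)).
  { replace (1 + (- sin t / (1 - cos t))^2) with (((1 - cos t)^2 + sin t ^2)/((1 - cos t)^2)) by (field; lra).
    replace ((1 - cos t)^2 + sin t ^2) with (2 * (1 - cos t)) by nra.
    field. lra. }
  rewrite E. field. lra. Qed.

Lemma sq_ratio F1 F2 L : 0 <= L -> Rabs (F2 - F1) <= L ->
  1 + F2^2 <= (1 + L)^2 * (1 + F1^2).
Proof. intros HL H. set (d := F2 - F1). replace F2 with (F1 + d) by (unfold d; ring).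
  assert (Hd: Rabs d <= L) by exact H.
  assert (A: 2*F1*d <= L*(1+F1^2)).
  { assert (2*F1*d <= 2*Rabs F1 * Rabs d).
    { assert (F1*d <= Rabs F1 * Rabs d) by (rewrite <- Rabs_mult; apply Rle_abs). lra. }
    assert (2*Rabs F1 <= 1 + F1^2).
    { pose proof (pow2_ge_0 (Rabs F1 - 1)). rewrite <- (pow2_abs F1). nra. }
    pose proof (Rabs_pos F1). pose proof (Rabs_pos d). nra. }
  assert (B: d^2 <= L^2*(1+F1^2)).
  { rewrite <- (pow2_abs d). pose proof (Rabs_pos d). pose proof (pow2_ge_0 F1). nra. }
  nra.
Qed.

Lemma arc_facts v P Q L : n2 v = 1 -> n2 P < 1 -> horo_arc_length v P Q L ->
  0 <= L /\ 1 - n2 P <= (1+L)^2 * (1 - n2 Q).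
Proof.
  intros Hv HP (t1 & t2 & Ht1 & Ht2 & EP & EQ & EL).
  pose proof (horo_radius_bounds v P Hv HP) as Hr.
  set (r := horo_radius v P) in *.
  rewrite hyp_length_hp in EL by auto.
  split. { rewrite EL; apply Rabs_pos. }
  assert (L0: 0 <= L) by (rewrite EL; apply Rabs_pos).
  pose proof (one_m_cos_pos _ Ht1) as C1. pose proof (one_m_cos_pos _ Ht2) as C2.
  set (F1 := - sin t1 / (1 - cos t1)). set (F2 := - sin t2 / (1 - cos t2)).
  assert (HF: Rabs (F2 - F1) <= L).
  { rewrite EL. unfold Gh.
    replace (F2 - F1) with ((1-r) * (- sin t2 / ((1 - r) * (1 - cos t2)) - - sin t1 / ((1 - r) * (1 - cos t1)))).
    2:{ unfold F1, F2. field. lra. }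
    rewrite Rabs_mult, Rabs_pos_eq by lra.
    pose proof (Rabs_pos (- sin t2 / ((1 - r) * (1 - cos t2)) - - sin t1 / ((1 - r) * (1 - cos t1)))).
    nra. }
  pose proof (sq_ratio F1 F2 L L0 HF) as SR.
  rewrite EP, EQ, !hp_n2 by auto.
  replace (1 - ((1 - r) ^ 2 + r ^ 2 + 2 * r * (1 - r) * cos t1)) with (2*r*(1-r)*(1 - cos t1)) by ring.
  replace (1 - ((1 - r) ^ 2 + r ^ 2 + 2 * r * (1 - r) * cos t2)) with (2*r*(1-r)*(1 - cos t2)) by ring.
  rewrite (one_m_cos_F t1 C1), (one_m_cos_F t2 C2). fold F1 F2.
  assert (P1: 0 < 1 + F1^2) by (pose proof (pow2_ge_0 F1); lra).
  assert (P2: 0 < 1 + F2^2) by (pose proof (pow2_ge_0 F2); lra).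
  assert (Pr: 0 < r * (1 - r)) by nra.
  replace (2 * r * (1 - r) * (2 / (1 + F1 ^ 2))) with (4 * (r*(1-r)) * / (1 + F1^2)) by (field; lra).
  replace ((1 + L) ^ 2 * (2 * r * (1 - r) * (2 / (1 + F2 ^ 2)))) with (4 * (r*(1-r)) * ((1+L)^2 / (1 + F2^2))) by (field; lra).
  apply Rmult_le_compat_l; [lra|].
  apply (Rmult_le_reg_r ((1+F1^2)*(1+F2^2))); [nra|].
  replace (/ (1 + F1 ^ 2) * ((1 + F1 ^ 2) * (1 + F2 ^ 2))) with (1 + F2^2) by (field; lra).
  replace ((1 + L) ^ 2 / (1 + F2 ^ 2) * ((1 + F1 ^ 2) * (1 + F2 ^ 2))) with ((1 + L) ^ 2 * (1 + F1 ^ 2)) by (field; lra).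
  exact SR.
Qed.

Lemma sum_n_S_R (L : nat -> R) n : sum_n L (S n) = sum_n L n + L (S n).
Proof. rewrite sum_Sn. reflexivity. Qed.

Lemma sum_n_mono (L : nat -> R) : (forall n, 0 <= L n) ->
  forall n m, (n <= m)%nat -> sum_n L n <= sum_n L m.
Proof. intros H n m Hnm. induction Hnm. lra. rewrite sum_n_S_R. specialize (H (S m)). lra. Qed.

Definition ps (L : nat -> R) (N : nat) : R := match N with O => 0 | S k => sum_n L k end.

Lemma ps_S L N : ps L (S N) = ps L N + L N.
Proof. destruct N; simpl. rewrite sum_O. ring. rewrite sum_n_S_R. reflexivity. Qed.

Lemma near_circle z zeta e : n2 zeta = 1 -> Cmod (Cminus z zeta) < e -> 1 - n2 z < 2*e.
Proof. intros Hz H.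
  assert (T: Cmod zeta <= Cmod z + Cmod (Cminus zeta z)).
  { replace zeta with (Cplus z (Cminus zeta z)) at 1.
    apply Cmod_triangle. destruct z, zeta. unfold Cminus, Cplus, Copp. simpl. f_equal; ring. }
  rewrite !Cmod_minus in *. rewrite (Cmod_n2 zeta), (Cmod_n2 z) in T.
  rewrite Hz, sqrt_1 in T.
  assert (E: dd2 zeta z = dd2 z zeta) by (unfold dd2; ring). rewrite E in T.
  pose proof (sqrt_pos (n2 z)). pose proof (sqrt_pos (dd2 z zeta)).
  assert (Hs: sqrt (n2 z) ^2 = n2 z) by (apply pow2_sqrt; apply n2_ge0).
  nra.
Qed.

Lemma exp_mono x y : x <= y -> exp x <= exp y.
Proof. intro H. destruct (Rle_lt_or_eq_dec _ _ H) as [h|h].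
  - left. apply exp_increasing. exact h.
  - rewrite h. lra. Qed.

Lemma forward (a b v P : nat -> C) (L : nat -> R)
  (Hv : forall n, n2 (v n) = 1)
  (HPd : forall n, n2 (P n) < 1)
  (HPg : forall n, geod (a n) (b n) (P n))
  (HL : forall n, horo_arc_length (v n) (P n) (P (S n)) (L n)) :
  converges_to_ideal_point a b -> is_lim_seq (sum_n L) p_infty.
Proof.
  intros (zeta & Hzeta & Hconv).
  apply circle_n2 in Hzeta.
  assert (HA: forall n, 0 <= L n /\ 1 - n2 (P n) <= (1 + L n)^2 * (1 - n2 (P (S n)))).
  { intro n. apply arc_facts with (v := v n); auto. }
  apply is_lim_seq_spec. intro M.
  destruct (classic (eventually (fun n => M < sum_n L n))) as [h|h]; auto. exfalso.
  assert (Hall: forall n, sum_n L n <= M).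
  { intro n. destruct (Rle_dec (sum_n L n) M) as [k|k]; auto. exfalso. apply h.
    exists n. intros m Hm. pose proof (sum_n_mono L (fun n => proj1 (HA n)) n m Hm). lra. }
  set (Mp := Rmax 0 M).
  assert (Hps: forall N, ps L N <= Mp).
  { intro N. destruct N; simpl; unfold Mp. apply Rmax_l. eapply Rle_trans; [apply Hall| apply Rmax_r]. }
  assert (Key: forall N, 1 - n2 (P 0%nat) <= (1 - n2 (P N)) * exp (2 * ps L N)).
  { induction N.
    - simpl. rewrite Rmult_0_r, exp_0. lra.
    - rewrite ps_S. destruct (HA N) as [H0 H1].
      assert (E1: (1 + L N)^2 <= exp (2 * L N)).
      { replace (2 * L N) with (L N + L N) by ring. rewrite exp_plus.
        pose proof (exp_ineq1_le (L N)). simpl. nra. }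
      pose proof (HPd (S N)). pose proof (exp_pos (2 * ps L N)).
      replace (exp (2 * (ps L N + L N))) with (exp (2 * ps L N) * exp (2 * L N))
        by (rewrite <- exp_plus; f_equal; ring).
      assert (0 <= 1 - n2 (P (S N))) by lra.
      assert (((1 + L N) ^ 2 * (1 - n2 (P (S N)))) * exp (2 * ps L N) <=
              (1 - n2 (P (S N))) * (exp (2 * ps L N) * exp (2 * L N))).
      { replace ((1 - n2 (P (S N))) * (exp (2 * ps L N) * exp (2 * L N))) with
          ((exp (2 * L N) * (1 - n2 (P (S N)))) * exp (2 * ps L N)) by ring.
        apply Rmult_le_compat_r; [lra|]. apply Rmult_le_compat_r; lra. }
      assert ((1 - n2 (P N)) * exp (2 * ps L N) <= ((1 + L N) ^ 2 * (1 - n2 (P (S N)))) * exp (2 * ps L N)).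
      { apply Rmult_le_compat_r; lra. }
      lra. }
  set (K := exp (2 * Mp)).
  assert (HK: 0 < K) by apply exp_pos.
  assert (Key2: forall N, 1 - n2 (P 0%nat) <= (1 - n2 (P N)) * K).
  { intro N. eapply Rle_trans; [apply Key|]. apply Rmult_le_compat_l.
    pose proof (HPd N); lra. unfold K. apply exp_mono. specialize (Hps N). lra. }
  set (c0 := 1 - n2 (P 0%nat)).
  assert (Hc0: 0 < c0) by (unfold c0; pose proof (HPd 0%nat); lra).
  destruct (Hconv (c0 / (4 * K))) as [N HN].
  { apply Rlt_gt. apply Rdiv_lt_0_compat; lra. }
  specialize (HN N (Nat.le_refl _) (P N) (HPg N)).
  pose proof (near_circle _ _ _ Hzeta HN) as Hn.
  specialize (Key2 N). fold c0 in Key2.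
  assert ((1 - n2 (P N)) * K < 2 * (c0 / (4 * K)) * K) by (apply Rmult_lt_compat_r; lra).
  replace (2 * (c0 / (4 * K)) * K) with (c0 / 2) in H by (field; lra).
  lra.
Qed.

Definition rot (z c : C) : C := (fst z * fst c + snd z * snd c, snd z * fst c - fst z * snd c).
Definition oneC : C := (1, 0).

Lemma rot_n2 z c : n2 (rot z c) = n2 z * n2 c.
Proof. unfold rot, n2; simpl; ring. Qed.
Lemma rot_dd2 z w c : dd2 (rot z c) (rot w c) = dd2 z w * n2 c.
Proof. unfold rot, dd2, n2; simpl; ring. Qed.
Lemma rot_gf a b z c : n2 c = 1 -> gf (rot a c) (rot b c) (rot z c) = gf a b z.
Proof. intro H.
  assert (E: gf (rot a c) (rot b c) (rot z c) =
    n2 c * ((fst a * snd b - snd a * fst b) * (1 + n2 c * n2 z)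
      - 2 * (snd z * (fst a - fst b) - fst z * (snd a - snd b)))).
  { unfold gf, rot, n2; simpl; ring. }
  rewrite E, H. unfold gf. ring. Qed.
Lemma rot_self c : n2 c = 1 -> rot c c = oneC.
Proof. intro H. unfold rot, oneC, n2 in *. simpl. f_equal; [lra| ring]. Qed.
Lemma rot_unrot c Z : n2 c = 1 -> rot (Cmult c Z) c = Z.
Proof. intro H. unfold rot, n2 in *. destruct c as [c1 c2], Z as [z1 z2]. cbn [fst snd Cmult] in *.
  f_equal.
  - replace ((c1 * z1 - c2 * z2) * c1 + (c1 * z2 + c2 * z1) * c2) with (z1 * (c1^2 + c2^2)) by ring. rewrite H; ring.
  - replace ((c1 * z2 + c2 * z1) * c1 - (c1 * z1 - c2 * z2) * c2) with (z2 * (c1^2 + c2^2)) by ring. rewrite H; ring.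
Qed.
Lemma n2_unrot c Z : n2 (Cmult c Z) = n2 c * n2 Z.
Proof. unfold n2. destruct c, Z; simpl; ring. Qed.

Definition Y1 (x : R) : C := ((x^2 - 1)/(x^2 + 1), 2*x/(x^2 + 1)).
Definition X1 (p : C) : R := snd p / (1 - fst p).

Lemma sq1_pos x : 0 < x^2 + 1.
Proof. pose proof (pow2_ge_0 x); lra. Qed.
Lemma sq1_pos' x : 0 < 1 + x^2.
Proof. pose proof (pow2_ge_0 x); lra. Qed.

Lemma circle_fst_lt p : n2 p = 1 -> p <> oneC -> fst p < 1.
Proof. intros H Hp. unfold n2, oneC in *. destruct p as [p1 p2]. cbn [fst snd] in *.
  destruct (Rlt_dec p1 1) as [h|h]; auto. exfalso.
  assert (p1 <= 1) by nra. assert (p1 = 1) by lra. subst.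
  assert (p2 = 0) by nra. subst. auto. Qed.

Lemma Y1X1 p : n2 p = 1 -> fst p < 1 -> Y1 (X1 p) = p.
Proof. intros H Hp. unfold Y1, X1, n2 in *. destruct p as [p1 p2]. cbn [fst snd] in *.
  assert (Ex: (p2 / (1 - p1))^2 = (1 + p1)/(1 - p1)).
  { replace ((p2 / (1 - p1))^2) with (p2^2 / (1-p1)^2) by (field; lra).
    replace (p2^2) with (1 - p1^2) by lra. field. lra. }
  rewrite Ex. f_equal; field; lra. Qed.

Lemma Y1_n2 x : n2 (Y1 x) = 1.
Proof. unfold n2, Y1. simpl. pose proof (sq1_pos x). field. lra. Qed.

Lemma Y1_dd2 x y : dd2 (Y1 x) (Y1 y) = 4*(x-y)^2/((1+x^2)*(1+y^2)).
Proof. unfold dd2, Y1. simpl. pose proof (sq1_pos x). pose proof (sq1_pos y). field. lra. Qed.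

Lemma Y1_dd2_one x : dd2 (Y1 x) oneC = 4/(1+x^2).
Proof. unfold dd2, Y1, oneC. simpl. pose proof (sq1_pos x). field. lra. Qed.

Lemma Y1_gf3 x y z : gf (Y1 x) (Y1 y) (Y1 z) =
  -8*(x-y)*(y-z)*(z-x)/((1+x^2)*(1+y^2)*(1+z^2)).
Proof. unfold gf, n2, Y1. simpl. pose proof (sq1_pos x). pose proof (sq1_pos y).
  pose proof (sq1_pos z). field. lra. Qed.

Lemma Y1_gf_one x y : gf (Y1 x) (Y1 y) oneC = 8*(x-y)/((1+x^2)*(1+y^2)).
Proof. unfold gf, n2, Y1, oneC. simpl. pose proof (sq1_pos x). pose proof (sq1_pos y).
  field. lra. Qed.

Lemma gf_one_Y1 x z : gf oneC (Y1 x) z = (2/(1+x^2)) * (x * dd2 z oneC - 2 * snd z).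
Proof. unfold gf, n2, Y1, oneC, dd2. simpl. pose proof (sq1_pos x). field. lra. Qed.

Lemma tangency1 x z : x * dd2 z oneC = 2 * snd z ->
  (1 - n2 z)^2 * dd2 oneC (Y1 x) = 4 * dd2 z oneC * dd2 z (Y1 x).
Proof. intro H. set (h := x * dd2 z oneC - 2 * snd z).
  assert (E: 4 * dd2 z oneC * dd2 z (Y1 x) - (1 - n2 z)^2 * dd2 oneC (Y1 x) = 4*h^2/(1+x^2)).
  { unfold h, dd2, n2, Y1, oneC. simpl. pose proof (sq1_pos x). field. lra. }
  assert (h = 0) by (unfold h; lra). rewrite H0 in E.
  replace (4 * 0^2 / (1+x^2)) with 0 in E by (field; pose proof (sq1_pos x); lra). lra. Qed.

Definition Zx (y x : R) : C :=
  let D := y^2*(1+x^2) + 4*y + 4 in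
  ((2*(1+x^2) + (y^2-2)*(x^2-1))/D, 2*x*y^2/D).

Lemma Zx_D_pos y x : 0 < y -> 4 < y^2*(1+x^2) + 4*y + 4.
Proof. intro. pose proof (sq1_pos' x). assert (0 < y^2*(1+x^2)) by (apply Rmult_lt_0_compat; nra). lra. Qed.

Lemma Zx_disk y x : 0 < y -> 1 - n2 (Zx y x) = 8*y/(y^2*(1+x^2) + 4*y + 4).
Proof. intro. pose proof (Zx_D_pos y x H). unfold n2, Zx. simpl. field. lra. Qed.

Lemma Zx_geo y x : 0 < y -> x * dd2 (Zx y x) oneC = 2 * snd (Zx y x).
Proof. intro. pose proof (Zx_D_pos y x H). unfold dd2, Zx, oneC. simpl. field. lra. Qed.

Lemma Zx_close y x : 0 < y -> dd2 (Zx y x) oneC <= y^2.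
Proof. intro. pose proof (Zx_D_pos y x H).
  assert (E: dd2 (Zx y x) oneC = 4*y^2/(y^2*(1+x^2) + 4*y + 4)).
  { unfold dd2, Zx, oneC. simpl. field. lra. }
  rewrite E. apply Rle_div_l; [lra|]. pose proof (pow2_ge_0 y). nra. Qed.

Lemma prod_bound u w B : Rabs w <= B -> u * w <= Rabs u * B.
Proof. intro H. eapply Rle_trans. apply Rle_abs. rewrite Rabs_mult.
  apply Rmult_le_compat_l; [apply Rabs_pos| exact H]. Qed.

Lemma abs_le_of_sq e y : 0 <= y -> e^2 <= y^2 -> Rabs e <= y.
Proof. intros Hy H. apply Rabs_le. split; nra. Qed.

Definition Kgf (a b : C) : R :=
  3 * Rabs (fst a * snd b - snd a * fst b) + 2 * Rabs (fst a - fst b) + 2 * Rabs (snd a - snd b).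

Lemma Kgf_ge0 a b : 0 <= Kgf a b.
Proof. unfold Kgf. pose proof (Rabs_pos (fst a * snd b - snd a * fst b)).
  pose proof (Rabs_pos (fst a - fst b)). pose proof (Rabs_pos (snd a - snd b)). lra. Qed.

Lemma gf_lip a b Z y : 0 <= y -> n2 Z <= 1 -> dd2 Z oneC <= y^2 ->
  gf a b Z - gf a b oneC <= Kgf a b * y.
Proof. intros Hy HZ Hd.
  set (al := fst a * snd b - snd a * fst b).
  assert (E: gf a b Z - gf a b oneC = al * ((fst Z - 1) * (fst Z + 1) + snd Z * snd Z)
     + 2 * (snd Z * (fst b - fst a)) + 2 * ((fst Z - 1) * (snd a - snd b))).
  { unfold gf, al, n2, oneC. cbn [fst snd]. ring. }
  rewrite E. unfold dd2, n2, oneC in *. cbn [fst snd] in *.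
  assert (h1: Rabs (fst Z - 1) <= y) by (apply abs_le_of_sq; nra).
  assert (h2: Rabs (snd Z) <= y) by (apply abs_le_of_sq; nra).
  assert (h3: Rabs (fst Z + 1) <= 2) by (apply Rabs_le; split; nra).
  assert (h4: Rabs (snd Z) <= 1) by (apply Rabs_le; split; nra).
  assert (h5: Rabs ((fst Z - 1) * (fst Z + 1) + snd Z * snd Z) <= 3 * y).
  { eapply Rle_trans. apply Rabs_triang. rewrite !Rabs_mult.
    pose proof (Rabs_pos (fst Z - 1)). pose proof (Rabs_pos (snd Z)). pose proof (Rabs_pos (fst Z + 1)).
    nra. }
  pose proof (prod_bound al _ _ h5).
  pose proof (prod_bound (fst b - fst a) _ _ h2).
  pose proof (prod_bound (snd a - snd b) _ _ h1).
  replace (Rabs (fst b - fst a)) with (Rabs (fst a - fst b)) in H0 by (rewrite <- Rabs_Ropp; f_equal; ring).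
  unfold Kgf. fold al.
  replace (snd Z * (fst b - fst a)) with ((fst b - fst a) * snd Z) by ring.
  replace ((fst Z - 1) * (snd a - snd b)) with ((snd a - snd b) * (fst Z - 1)) by ring.
  replace ((3 * Rabs al + 2 * Rabs (fst a - fst b) + 2 * Rabs (snd a - snd b)) * y) with
    (Rabs al * (3 * y) + 2 * (Rabs (fst a - fst b) * y) + 2 * (Rabs (snd a - snd b) * y)) by ring.
  lra.
Qed.

Lemma rot_inj z w c : n2 c = 1 -> rot z c = rot w c -> z = w.
Proof. intros Hc E. assert (H: dd2 (rot z c) (rot w c) = 0) by (rewrite E; unfold dd2; ring).
  rewrite rot_dd2, Hc, Rmult_1_r in H. unfold dd2 in H. destruct z as [z1 z2], w as [w1 w2].
  cbn [fst snd] in H.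
  pose proof (pow2_ge_0 (z1 - w1)). pose proof (pow2_ge_0 (z2 - w2)).
  assert (h1: (z1 - w1)^2 = 0) by lra. assert (h2: (z2 - w2)^2 = 0) by lra.
  f_equal; nra. Qed.

Lemma transfer a b c d : n2 c = 1 -> n2 d = 1 -> c <> d ->
  (forall z, geod c d z -> gf a b z > 0) -> gf a b c >= 0.
Proof.
  intros Hc Hd Hcd H.
  set (be := rot d c).
  assert (Hbe: n2 be = 1) by (unfold be; rewrite rot_n2, Hc, Hd; ring).
  assert (Hbe1: be <> oneC).
  { intro E. apply Hcd. apply (rot_inj _ _ c Hc). rewrite rot_self by exact Hc. symmetry. exact E. }
  pose proof (circle_fst_lt _ Hbe Hbe1) as Hf.
  set (x := X1 be).
  assert (Ebe: Y1 x = be) by (apply Y1X1; auto).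
  set (a' := rot a c). set (b' := rot b c).
  assert (Hpos: forall y, 0 < y -> gf a' b' (Zx y x) > 0).
  { intros y Hy. set (z := Cmult c (Zx y x)).
    assert (Ez: rot z c = Zx y x) by (apply rot_unrot; exact Hc).
    assert (G: geod c d z).
    { split.
      - apply n2_disk. unfold z. rewrite n2_unrot, Hc, Rmult_1_l.
        pose proof (Zx_disk y x Hy). pose proof (Zx_D_pos y x Hy).
        assert (0 < 8 * y / (y ^ 2 * (1 + x ^ 2) + 4 * y + 4)) by (apply Rdiv_lt_0_compat; lra).
        lra.
      - rewrite geoF_gf. rewrite <- (rot_gf c d z c Hc). rewrite rot_self, Ez by exact Hc.
        fold be. rewrite <- Ebe. rewrite gf_one_Y1. rewrite Zx_geo by exact Hy. ring. }
    specialize (H z G). unfold a', b'. rewrite <- Ez. rewrite rot_gf by exact Hc. exact H. }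
  assert (Eone: gf a b c = gf a' b' oneC).
  { unfold a', b'. rewrite <- (rot_self c Hc). rewrite rot_gf by exact Hc. reflexivity. }
  rewrite Eone. apply Rnot_lt_ge. intro Hneg.
  set (g := gf a' b' oneC). set (K := Kgf a' b').
  pose proof (Kgf_ge0 a' b') as HK. fold K in HK.
  set (y := - g / (K + 1)).
  assert (Hy: 0 < y) by (unfold y; apply Rdiv_lt_0_compat; fold g in Hneg; lra).
  pose proof (Hpos y Hy) as Hp.
  assert (HZ: n2 (Zx y x) <= 1).
  { pose proof (Zx_disk y x Hy). pose proof (Zx_D_pos y x Hy).
    assert (0 < 8 * y / (y ^ 2 * (1 + x ^ 2) + 4 * y + 4)) by (apply Rdiv_lt_0_compat; lra). lra. }
  pose proof (gf_lip a' b' (Zx y x) y (Rlt_le _ _ Hy) HZ (Zx_close y x Hy)) as Hl.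
  fold g K in Hl.
  assert (K * y < - g).
  { unfold y. apply (Rmult_lt_reg_r (K+1)); [lra|].
    replace (K * (- g / (K + 1)) * (K + 1)) with (K * - g) by (field; lra). fold g in Hneg. nra. }
  lra.
Qed.

Definition Tv (v z : C) : R := (1 - n2 z) / dd2 z v.
Definition Xt (v z : C) : R := 2 * imr z v / dd2 z v.

Lemma dd2_pos_disk z v : n2 v = 1 -> n2 z < 1 -> 0 < dd2 z v.
Proof. intros Hv Hz. destruct (Rle_lt_or_eq_dec 0 (dd2 z v) (dd2_ge0 _ _)) as [h|h]; auto.
  exfalso. unfold dd2, n2 in *.
  pose proof (pow2_ge_0 (fst z - fst v)). pose proof (pow2_ge_0 (snd z - snd v)).
  assert (h1: (fst z - fst v)^2 = 0) by lra. assert (h2: (snd z - snd v)^2 = 0) by lra.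
  assert (fst z = fst v) by nra. assert (snd z = snd v) by nra.
  rewrite H1, H2 in Hz. lra. Qed.

Lemma dd2_sym z w : dd2 z w = dd2 w z.
Proof. unfold dd2; ring. Qed.

Lemma arc_formula v P Q L : n2 v = 1 -> n2 P < 1 -> horo_arc_length v P Q L ->
  0 < Tv v P /\ Tv v Q = Tv v P /\ n2 Q < 1 /\ L = Rabs (Xt v Q - Xt v P) / Tv v P.
Proof.
  intros Hv HP (t1 & t2 & Ht1 & Ht2 & EP & EQ & EL).
  pose proof (horo_radius_bounds v P Hv HP) as Hr.
  set (r := horo_radius v P) in *.
  rewrite hyp_length_hp in EL by auto.
  pose proof (one_m_cos_pos _ Ht1) as C1. pose proof (one_m_cos_pos _ Ht2) as C2.
  assert (TP: forall t, 0 < 1 - cos t -> Tv v (horo_param v r t) = (1 - r)/r).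
  { intros t Ct. unfold Tv. rewrite hp_n2, hp_dd2 by exact Hv.
    replace (1 - ((1 - r) ^ 2 + r ^ 2 + 2 * r * (1 - r) * cos t)) with (2*r*(1-r)*(1-cos t)) by ring.
    field. split; lra. }
  assert (XP: forall t, 0 < 1 - cos t -> Xt v (horo_param v r t) = sin t / (r * (1 - cos t))).
  { intros t Ct. unfold Xt. rewrite hp_imr, hp_dd2 by exact Hv. field. split; lra. }
  rewrite EP, EQ. rewrite !TP by auto. rewrite !XP by auto.
  split; [apply Rdiv_lt_0_compat; lra|]. split; [reflexivity|]. split.
  { rewrite hp_n2 by exact Hv.
    assert (0 < 2*r*(1-r)*(1-cos t2)) by (apply Rmult_lt_0_compat; [nra|lra]).
    replace (1 - ((1 - r) ^ 2 + r ^ 2 + 2 * r * (1 - r) * cos t2)) with (2*r*(1-r)*(1-cos t2)) in * by ring.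
    nra. }
  rewrite EL. unfold Gh.
  replace (- sin t2 / ((1 - r) * (1 - cos t2)) - - sin t1 / ((1 - r) * (1 - cos t1))) with
    (- ((sin t2 / (r * (1 - cos t2)) - sin t1 / (r * (1 - cos t1))) / ((1-r)/r))) by (field; repeat split; lra).
  rewrite Rabs_Ropp. unfold Rdiv at 1. rewrite Rabs_mult, Rabs_inv, (Rabs_pos_eq ((1-r)/r)).
  - reflexivity.
  - apply Rlt_le, Rdiv_lt_0_compat; lra.
Qed.

(* geodesic through c (on the circle) and p, in the frame rotated by c *)
Lemma geo_rot c p z : n2 c = 1 -> n2 p = 1 -> p <> c -> n2 z < 1 -> gf c p z = 0 ->
  Y1 (X1 (rot p c)) = rot p c /\ X1 (rot p c) * dd2 (rot z c) oneC = 2 * snd (rot z c).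
Proof.
  intros Hc Hp Hpc Hz G.
  assert (Hb: n2 (rot p c) = 1) by (rewrite rot_n2, Hc, Hp; ring).
  assert (Hb1: rot p c <> oneC).
  { intro E. apply Hpc. apply (rot_inj _ _ c Hc). rewrite rot_self by exact Hc. exact E. }
  assert (EY: Y1 (X1 (rot p c)) = rot p c) by (apply Y1X1; auto; apply circle_fst_lt; auto).
  split; auto.
  rewrite <- (rot_gf c p z c Hc), rot_self in G by exact Hc.
  rewrite <- EY in G. rewrite gf_one_Y1 in G.
  pose proof (sq1_pos' (X1 (rot p c))).
  assert (2 / (1 + X1 (rot p c) ^ 2) <> 0) by (apply Rgt_not_eq, Rdiv_lt_0_compat; lra).
  apply Rmult_integral in G. destruct G as [G|G]; [contradiction|]. lra.
Qed.

Lemma Xt_geo c p z : n2 c = 1 -> n2 p = 1 -> p <> c -> n2 z < 1 -> gf c p z = 0 ->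
  Xt c z = X1 (rot p c).
Proof.
  intros Hc Hp Hpc Hz G. destruct (geo_rot c p z Hc Hp Hpc Hz G) as [_ E].
  unfold Xt.
  assert (Ed: dd2 z c = dd2 (rot z c) oneC).
  { rewrite <- (rot_self c Hc), rot_dd2, Hc. ring. }
  assert (Ei: imr z c = snd (rot z c)) by (unfold imr, rot; simpl; ring).
  rewrite Ed, Ei. pose proof (dd2_pos_disk z c Hc Hz). rewrite Ed in H.
  rewrite <- E. field. lra.
Qed.

Lemma tangency c p z : n2 c = 1 -> n2 p = 1 -> p <> c -> n2 z < 1 -> gf c p z = 0 ->
  Tv c z * Tv p z * dd2 c p = 4.
Proof.
  intros Hc Hp Hpc Hz G. destruct (geo_rot c p z Hc Hp Hpc Hz G) as [EY E].
  pose proof (tangency1 _ _ E) as T. rewrite EY in T.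
  rewrite <- (rot_self c Hc) in T. rewrite !rot_dd2, rot_n2, Hc, !Rmult_1_r in T.
  unfold Tv. pose proof (dd2_pos_disk z c Hc Hz). pose proof (dd2_pos_disk z p Hp Hz).
  apply (Rmult_eq_reg_r (dd2 z c * dd2 z p)); [|nra].
  replace ((1 - n2 z) / dd2 z c * ((1 - n2 z) / dd2 z p) * dd2 c p * (dd2 z c * dd2 z p))
    with ((1 - n2 z)^2 * dd2 c p) by (field; lra).
  rewrite T. ring.
Qed.

Lemma X1_diff c p q : n2 c = 1 -> n2 p = 1 -> n2 q = 1 -> p <> c -> q <> c ->
  (X1 (rot p c) - X1 (rot q c))^2 * dd2 p c * dd2 q c = 4 * dd2 p q.
Proof.
  intros Hc Hp Hq Hpc Hqc.
  assert (A: forall u, n2 u = 1 -> u <> c -> Y1 (X1 (rot u c)) = rot u c).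
  { intros u Hu Huc. apply Y1X1. rewrite rot_n2, Hc, Hu; ring.
    apply circle_fst_lt. rewrite rot_n2, Hc, Hu; ring.
    intro E. apply Huc. apply (rot_inj _ _ c Hc). rewrite rot_self by exact Hc. exact E. }
  assert (Ep: dd2 p c = dd2 (rot p c) oneC) by (rewrite <- (rot_self c Hc), rot_dd2, Hc; ring).
  assert (Eq: dd2 q c = dd2 (rot q c) oneC) by (rewrite <- (rot_self c Hc), rot_dd2, Hc; ring).
  assert (Epq: dd2 p q = dd2 (rot p c) (rot q c)) by (rewrite rot_dd2, Hc; ring).
  pose proof (A p Hp Hpc) as Ap. pose proof (A q Hq Hqc) as Aq.
  set (xp := X1 (rot p c)) in *. set (xq := X1 (rot q c)) in *.
  rewrite Ep, Eq, Epq. rewrite <- Ap, <- Aq.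
  rewrite !Y1_dd2_one, Y1_dd2.
  pose proof (sq1_pos' xp). pose proof (sq1_pos' xq).
  field. lra.
Qed.

Definition wseq (u : C) (v : nat -> C) (n : nat) : C :=
  match n with O => u | S k => v k end.

Lemma w_struct (a b v : nat -> C) (u : C)
  (Hdist : forall n, a n <> b n)
  (Hvert : forall n, is_endpoint (a n) (b n) (v n) /\ is_endpoint (a (S n)) (b (S n)) (v n))
  (Hthree : forall i j k p, (i < j)%nat -> (j < k)%nat ->
     ~ (is_endpoint (a i) (b i) p /\ is_endpoint (a j) (b j) p /\ is_endpoint (a k) (b k) p))
  (Hu : (a 0%nat = u /\ b 0%nat = v 0%nat) \/ (a 0%nat = v 0%nat /\ b 0%nat = u)) :
  forall n, (a n = wseq u v n /\ b n = wseq u v (S n)) \/ (a n = wseq u v (S n) /\ b n = wseq u v n).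
Proof.
  intros [|m]; simpl.
  - destruct Hu as [[h1 h2]|[h1 h2]]; [left|right]; auto.
  - assert (Hne: v m <> v (S m)).
    { intro E. apply (Hthree m (S m) (S (S m)) (v m)); try lia.
      split; [apply Hvert|]. split; [apply Hvert|]. rewrite E. apply Hvert. }
    destruct (proj2 (Hvert m)) as [h1|h1]; destruct (proj1 (Hvert (S m))) as [h2|h2].
    + exfalso. apply Hne. congruence.
    + left. split; congruence.
    + right. split; congruence.
    + exfalso. apply Hne. congruence.
Qed.

Lemma gf_sigma a b c d : (a = c /\ b = d) \/ (a = d /\ b = c) ->
  exists s, (s = 1 \/ s = -1) /\ forall z, gf a b z = s * gf c d z.
Proof. intros [[h1 h2]|[h1 h2]]; subst.
  - exists 1. split; [left; reflexivity| intro; ring].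
  - exists (-1). split; [right; reflexivity| intro; rewrite gf_swap; ring]. Qed.

Lemma geod_swap a b z : geod a b z -> geod b a z.
Proof. unfold geod. rewrite !geoF_gf, gf_swap. intros [h1 h2]. split; auto. lra. Qed.

Lemma geod_pair a b c d z : (a = c /\ b = d) \/ (a = d /\ b = c) -> geod c d z -> geod a b z.
Proof. intros [[h1 h2]|[h1 h2]]; subst; auto. apply geod_swap. Qed.

Lemma nest_sep (a b : nat -> C) (w : nat -> C)
  (Hw : forall n, (a n = w n /\ b n = w (S n)) \/ (a n = w (S n) /\ b n = w n))
  (Hc : forall n, n2 (w n) = 1)
  (Hd1 : forall n, w n <> w (S n))
  (Hnest : forall n, (1 <= n)%nat ->
     ((forall z, geod (a (n - 1)%nat) (b (n - 1)%nat) z -> side_pos (a n) (b n) z) /\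
      (forall z, geod (a (n + 1)%nat) (b (n + 1)%nat) z -> side_neg (a n) (b n) z)) \/
     ((forall z, geod (a (n - 1)%nat) (b (n - 1)%nat) z -> side_neg (a n) (b n) z) /\
      (forall z, geod (a (n + 1)%nat) (b (n + 1)%nat) z -> side_pos (a n) (b n) z))) :
  forall m, gf (w (S m)) (w (S (S m))) (w m) * gf (w (S m)) (w (S (S m))) (w (S (S (S m)))) <= 0.
Proof.
  intro m. specialize (Hnest (S m) ltac:(lia)).
  replace (S m - 1)%nat with m in Hnest by lia. replace (S m + 1)%nat with (S (S m)) in Hnest by lia.
  destruct (gf_sigma _ _ _ _ (Hw (S m))) as [s [Hs Es]].
  assert (Hs2: s * s = 1) by (destruct Hs; subst; ring).
  set (n := S m) in *.
  set (G := fun z => gf (w n) (w (S n)) z).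
  assert (Hne1: w (S (S n)) <> w (S n)) by (intro E; apply (Hd1 (S n)); auto).
  destruct Hnest as [[H1 H2]|[H1 H2]].
  - assert (A1: gf (a n) (b n) (w m) >= 0).
    { apply transfer with (d := w n); auto. intros z Hz.
      destruct (H1 z (geod_pair _ _ _ _ _ (Hw m) Hz)) as [_ h]. rewrite geoF_gf in h. exact h. }
    assert (A2: gf (b n) (a n) (w (S (S n))) >= 0).
    { apply transfer with (d := w (S n)); auto. intros z Hz.
      destruct (H2 z (geod_pair _ _ _ _ _ (Hw (S n)) (geod_swap _ _ _ Hz))) as [_ h].
      rewrite geoF_gf in h. rewrite gf_swap. lra. }
    rewrite gf_swap in A2. rewrite !Es in *.
    assert (s * gf (w n) (w (S n)) (w m) * (s * gf (w n) (w (S n)) (w (S (S n)))) <= 0) by nra.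
    replace (s * gf (w n) (w (S n)) (w m) * (s * gf (w n) (w (S n)) (w (S (S n)))))
      with ((s*s) * (gf (w n) (w (S n)) (w m) * gf (w n) (w (S n)) (w (S (S n))))) in H by ring.
    rewrite Hs2, Rmult_1_l in H. exact H.
  - assert (A1: gf (b n) (a n) (w m) >= 0).
    { apply transfer with (d := w n); auto. intros z Hz.
      destruct (H1 z (geod_pair _ _ _ _ _ (Hw m) Hz)) as [_ h]. rewrite geoF_gf in h.
      rewrite gf_swap. lra. }
    assert (A2: gf (a n) (b n) (w (S (S n))) >= 0).
    { apply transfer with (d := w (S n)); auto. intros z Hz.
      destruct (H2 z (geod_pair _ _ _ _ _ (Hw (S n)) (geod_swap _ _ _ Hz))) as [_ h].
      rewrite geoF_gf in h. exact h. }
    rewrite gf_swap in A1. rewrite !Es in *.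
    assert (s * gf (w n) (w (S n)) (w m) * (s * gf (w n) (w (S n)) (w (S (S n)))) <= 0) by nra.
    replace (s * gf (w n) (w (S n)) (w m) * (s * gf (w n) (w (S n)) (w (S (S n)))))
      with ((s*s) * (gf (w n) (w (S n)) (w m) * gf (w n) (w (S n)) (w (S (S n))))) in H by ring.
    rewrite Hs2, Rmult_1_l in H. exact H.
Qed.

Lemma div_nonpos_num a d : 0 < d -> a / d <= 0 -> a <= 0.
Proof. intros Hd H. apply Rmult_le_compat_r with (r := d) in H; [|lra].
  unfold Rdiv in H. rewrite Rmult_assoc, Rinv_l, Rmult_1_r, Rmult_0_l in H by lra. exact H. Qed.

Lemma rot_Y1 (q p : C) : n2 q = 1 -> n2 p = 1 -> p <> q -> Y1 (X1 (rot p q)) = rot p q.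
Proof. intros Hq Hp Hpq. apply Y1X1. rewrite rot_n2, Hq, Hp; ring.
  apply circle_fst_lt. rewrite rot_n2, Hq, Hp; ring.
  intro E. apply Hpq. apply (rot_inj _ _ q Hq). rewrite rot_self by exact Hq. exact E. Qed.

Lemma xbetween (w : nat -> C)
  (Hc : forall n, n2 (w n) = 1)
  (Hd1 : forall n, w n <> w (S n))
  (Hd2 : forall n, w n <> w (S (S n)))
  (Hd0 : forall k, w (S k) <> w 0%nat)
  (Hsep : forall m, gf (w (S m)) (w (S (S m))) (w m) * gf (w (S m)) (w (S (S m))) (w (S (S (S m)))) <= 0) :
  let y := fun k => X1 (rot (w (S k)) (w 0%nat)) in
  forall k, (y (S (S k)) - y k) * (y (S (S k)) - y (S k)) < 0.
Proof.
  intro y. set (q := w 0%nat).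
  assert (HY: forall k, Y1 (y k) = rot (w (S k)) q).
  { intro k. apply rot_Y1; [apply Hc| apply Hc| apply Hd0]. }
  assert (Hinj: forall i j, w (S i) <> w (S j) -> y i <> y j).
  { intros i j H E. apply H. apply (rot_inj _ _ q (Hc 0%nat)). rewrite <- !HY. rewrite E. reflexivity. }
  assert (G3: forall i j k, gf (w (S i)) (w (S j)) (w (S k)) =
     -8*(y i - y j)*(y j - y k)*(y k - y i)/((1+y i^2)*(1+y j^2)*(1+y k^2))).
  { intros. rewrite <- (rot_gf _ _ _ q (Hc 0%nat)). rewrite <- !HY. apply Y1_gf3. }
  assert (G0: forall i j, gf (w (S i)) (w (S j)) q = 8*(y i - y j)/((1+y i^2)*(1+y j^2))).
  { intros. rewrite <- (rot_gf _ _ _ q (Hc 0%nat)). rewrite <- !HY. rewrite rot_self by apply Hc.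
    apply Y1_gf_one. }
  assert (P: forall t, 0 < 1 + t^2) by (intro; apply sq1_pos').
  induction k.
  - specialize (Hsep 0%nat). fold q in Hsep. rewrite G0, (G3 0%nat 1%nat 2%nat) in Hsep.
    set (a := y 0%nat) in *. set (b := y 1%nat) in *. set (c := y 2%nat) in *.
    assert (E: 8 * (a - b) / ((1 + a ^ 2) * (1 + b ^ 2)) *
       (-8 * (a - b) * (b - c) * (c - a) / ((1 + a ^ 2) * (1 + b ^ 2) * (1 + c ^ 2))) =
       (- 64 * ((a-b)^2 * ((b - c) * (c - a)))) / (((1 + a ^ 2) * (1 + b ^ 2)) * ((1 + a ^ 2) * (1 + b ^ 2) * (1 + c ^ 2)))).
    { field. split; [|split]; apply Rgt_not_eq, P. }
    rewrite E in Hsep. apply div_nonpos_num in Hsep.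
    2:{ pose proof (P a). pose proof (P b). pose proof (P c). apply Rmult_lt_0_compat; apply Rmult_lt_0_compat; try apply Rmult_lt_0_compat; auto. }
    assert (hab: a <> b) by (apply Hinj; apply Hd1).
    assert (hbc: c <> b) by (apply Hinj; intro E'; apply (Hd1 2%nat); auto).
    assert (hac: c <> a) by (apply Hinj; intro E'; apply (Hd2 1%nat); auto).
    assert (0 < (a - b)^2) by (apply pow2_gt_0; lra).
    assert (h: (b - c) * (c - a) >= 0) by nra.
    assert ((b - c) * (c - a) <> 0) by (intro h'; apply Rmult_integral in h'; destruct h'; lra).
    nra.
  - specialize (Hsep (S k)). rewrite !G3 in Hsep.
    set (p0 := y k) in *. set (A := y (S k)) in *. set (B := y (S (S k))) in *. set (p3 := y (S (S (S k)))) in *.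
    assert (E: -8 * (A - B) * (B - p0) * (p0 - A) / ((1 + A ^ 2) * (1 + B ^ 2) * (1 + p0 ^ 2)) *
       (-8 * (A - B) * (B - p3) * (p3 - A) / ((1 + A ^ 2) * (1 + B ^ 2) * (1 + p3 ^ 2))) =
       (64 * ((A - B)^2 * ((B - p0) * (p0 - A) * ((B - p3) * (p3 - A))))) /
       (((1 + A ^ 2) * (1 + B ^ 2) * (1 + p0 ^ 2)) * ((1 + A ^ 2) * (1 + B ^ 2) * (1 + p3 ^ 2)))).
    { field. split; [|split; [|split]]; apply Rgt_not_eq, P. }
    rewrite E in Hsep. apply div_nonpos_num in Hsep.
    2:{ pose proof (P A). pose proof (P B). pose proof (P p0). pose proof (P p3).
        repeat apply Rmult_lt_0_compat; auto. }
    assert (hab: A <> B) by (apply Hinj; apply Hd1).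
    assert (h3b: p3 <> B) by (apply Hinj; intro E'; apply (Hd1 (S (S (S k)))); auto).
    assert (h3a: p3 <> A) by (apply Hinj; intro E'; apply (Hd2 (S (S k))); auto).
    assert (0 < (A - B)^2) by (apply pow2_gt_0; lra).
    assert (h1: (B - p0) * (p0 - A) < 0) by nra.
    set (X := (B - p0) * (p0 - A)) in *. set (Yv := (B - p3) * (p3 - A)) in *.
    set (D := (A - B)^2) in *.
    assert (h4: X * Yv <= 0).
    { destruct (Rle_dec (X * Yv) 0); auto. assert (0 < D * (X * Yv)) by (apply Rmult_lt_0_compat; lra). lra. }
    assert (h2: Yv >= 0) by nra.
    assert (Yv <> 0) by (unfold Yv; intro h'; apply Rmult_integral in h'; destruct h'; lra).
    assert (Yv > 0) by lra. unfold Yv in *. nra.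
Qed.

Lemma dd2_tri A B C0 : sqrt (dd2 A C0) <= sqrt (dd2 A B) + sqrt (dd2 B C0).
Proof. rewrite <- !Cmod_minus.
  replace (Cminus A C0) with (Cplus (Cminus A B) (Cminus B C0)).
  apply Cmod_triangle. destruct A, B, C0. unfold Cminus, Cplus, Copp. simpl. f_equal; ring. Qed.

Lemma dd2_circle_le4 A B : n2 A = 1 -> n2 B = 1 -> dd2 A B <= 4.
Proof. intros HA HB. unfold n2, dd2 in *.
  pose proof (pow2_ge_0 (fst A + fst B)). pose proof (pow2_ge_0 (snd A + snd B)). nra. Qed.

Lemma ln_lower x : 0 < x -> 1 - 1/x <= ln x.
Proof. intro H. pose proof (exp_ineq1_le (ln (1/x))).
  rewrite exp_ln in H0 by (apply Rdiv_lt_0_compat; lra).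
  unfold Rdiv in *. rewrite Rmult_1_l in *. rewrite ln_Rinv in H0 by lra. lra. Qed.

Lemma ps_shift (E0 : nat -> R) N : ps E0 (S N) = E0 0%nat + ps (fun k => E0 (S k)) N.
Proof. induction N. simpl. rewrite sum_O. ring. rewrite ps_S, IHN, ps_S. ring. Qed.

Lemma ps_le (f g : nat -> R) N : (forall n, f n <= g n) -> ps f N <= ps g N.
Proof. intro H. induction N. simpl; lra. rewrite !ps_S. specialize (H N). lra. Qed.

Lemma ps_scal (f : nat -> R) c N : ps (fun n => c * f n) N = c * ps f N.
Proof. induction N. simpl; ring. rewrite !ps_S, IHN. ring. Qed.

Lemma ps_nonneg (f : nat -> R) N : (forall n, 0 <= f n) -> 0 <= ps f N.
Proof. intro H. induction N. simpl; lra. rewrite ps_S. specialize (H N). lra. Qed.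

Lemma Y1_dd2_le a b : dd2 (Y1 a) (Y1 b) <= 4 * (a - b)^2.
Proof. rewrite Y1_dd2. pose proof (pow2_ge_0 a). pose proof (pow2_ge_0 b).
  pose proof (pow2_ge_0 (a - b)).
  apply Rle_div_l. nra. nra. Qed.

Lemma Y1_dd2_ge a b M : Rabs a <= M -> Rabs b <= M ->
  4 * (a - b)^2 / (1 + M^2)^2 <= dd2 (Y1 a) (Y1 b).
Proof. intros Ha Hb. rewrite Y1_dd2.
  assert (a^2 <= M^2) by (rewrite <- (pow2_abs a); pose proof (Rabs_pos a); nra).
  assert (b^2 <= M^2) by (rewrite <- (pow2_abs b); pose proof (Rabs_pos b); nra).
  pose proof (pow2_ge_0 a). pose proof (pow2_ge_0 b). pose proof (pow2_ge_0 (a - b)).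
  unfold Rdiv. apply Rmult_le_compat_l; [nra|].
  apply Rinv_le_contravar. nra. nra. Qed.

Lemma sqrt_lt_sq x e : 0 <= x -> 0 < e -> x < e^2 -> sqrt x < e.
Proof. intros Hx He H. rewrite <- (sqrt_pow2 e) by lra. apply sqrt_lt_1_alt. lra. Qed.

Definition ell (y : nat -> R) (k : nat) : R := Rabs (y (S k) - y k).
Definition skip (y : nat -> R) (k : nat) : R := Rabs (y (S (S k)) - y k).

Ltac abs_cases := unfold Rabs; repeat match goal with |- context [Rcase_abs ?t] => destruct (Rcase_abs t) end.

Lemma btw_min_max a b c : (c - a) * (c - b) < 0 -> Rmin a b < c < Rmax a b.
Proof. intro H. unfold Rmin, Rmax. destruct (Rle_dec a b); split; nra. Qed.

Lemma between_interval (y : nat -> R)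
  (Hb : forall k, (y (S (S k)) - y k) * (y (S (S k)) - y (S k)) < 0) :
  forall j i, Rmin (y j) (y (S j)) <= y (j + i)%nat <= Rmax (y j) (y (S j)).
Proof.
  intros j.
  assert (forall i, (Rmin (y j) (y (S j)) <= y (j + i)%nat <= Rmax (y j) (y (S j))) /\
                    (Rmin (y j) (y (S j)) <= y (j + S i)%nat <= Rmax (y j) (y (S j)))).
  { induction i.
    - rewrite Nat.add_0_r. replace (j + 1)%nat with (S j) by lia.
      split; split; [apply Rmin_l| apply Rmax_l| apply Rmin_r| apply Rmax_r].
    - destruct IHi as [H1 H2]. split; auto.
      pose proof (btw_min_max _ _ _ (Hb (j + i)%nat)) as B.
      replace (S (S (j + i))) with (j + S (S i))%nat in B by lia.
      replace (S (j + i)) with (j + S i)%nat in B by lia.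
      unfold Rmin, Rmax in *.
      destruct (Rle_dec (y j) (y (S j))); destruct (Rle_dec (y (j + i)%nat) (y (j + S i)%nat)); lra. }
  intro i. apply H.
Qed.

Lemma ell_step (y : nat -> R)
  (Hb : forall k, (y (S (S k)) - y k) * (y (S (S k)) - y (S k)) < 0) k :
  ell y (S k) + skip y k = ell y k.
Proof. specialize (Hb k). unfold ell, skip.
  destruct (Rle_dec (y k) (y (S k))).
  - assert (y k < y (S (S k)) < y (S k)) by (split; nra).
    rewrite (Rabs_left (y (S (S k)) - y (S k))) by lra.
    rewrite (Rabs_pos_eq (y (S (S k)) - y k)) by lra.
    rewrite (Rabs_pos_eq (y (S k) - y k)) by lra. ring.
  - assert (y (S k) < y (S (S k)) < y k) by (split; nra).
    rewrite (Rabs_pos_eq (y (S (S k)) - y (S k))) by lra.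
    rewrite (Rabs_left (y (S (S k)) - y k)) by lra.
    rewrite (Rabs_left (y (S k) - y k)) by lra. ring.
Qed.

Lemma ell_mono (y : nat -> R)
  (Hb : forall k, (y (S (S k)) - y k) * (y (S (S k)) - y (S k)) < 0) :
  forall k m, (k <= m)%nat -> ell y m <= ell y k.
Proof. intros k m H. induction H. lra.
  pose proof (ell_step y Hb m). assert (0 <= skip y m) by apply Rabs_pos. lra. Qed.

Lemma skip_sum (y : nat -> R)
  (Hb : forall k, (y (S (S k)) - y k) * (y (S (S k)) - y (S k)) < 0) :
  forall N, ps (skip y) N = ell y 0 - ell y N.
Proof. induction N. simpl. ring. rewrite ps_S, IHN. pose proof (ell_step y Hb N). lra. Qed.

Lemma y_close (y : nat -> R)
  (Hb : forall k, (y (S (S k)) - y k) * (y (S (S k)) - y (S k)) < 0) :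
  forall k m, (k <= m)%nat -> Rabs (y m - y k) <= ell y k.
Proof. intros k m H. replace m with (k + (m - k))%nat by lia.
  pose proof (between_interval y Hb k (m - k)) as B. unfold ell.
  unfold Rmin, Rmax in B. destruct (Rle_dec (y k) (y (S k))).
  - rewrite (Rabs_pos_eq (y (S k) - y k)) by lra. apply Rabs_le. lra.
  - rewrite (Rabs_left (y (S k) - y k)) by lra. apply Rabs_le. lra.
Qed.

Lemma y_bound (y : nat -> R)
  (Hb : forall k, (y (S (S k)) - y k) * (y (S (S k)) - y (S k)) < 0) :
  forall m, Rabs (y m) <= Rabs (y 0%nat) + Rabs (y 1%nat).
Proof. intro m. pose proof (between_interval y Hb 0 m) as B. simpl in B.
  unfold Rmin, Rmax in B. apply Rabs_le.
  pose proof (Rle_abs (y 0%nat)). pose proof (Rle_abs (y 1%nat)).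
  pose proof (Rabs_pos (y 0%nat)). pose proof (Rabs_pos (y 1%nat)).
  pose proof (Rabs_Ropp (y 0%nat)). pose proof (Rle_abs (- y 0%nat)).
  pose proof (Rabs_Ropp (y 1%nat)). pose proof (Rle_abs (- y 1%nat)).
  destruct (Rle_dec (y 0%nat) (y 1%nat)); lra.
Qed.

Lemma geod_w (a b w : nat -> C)
  (Hw : forall n, (a n = w n /\ b n = w (S n)) \/ (a n = w (S n) /\ b n = w n)) n z :
  geod (a n) (b n) z -> n2 z < 1 /\ gf (w n) (w (S n)) z = 0.
Proof. intros [Hd G]. split. apply disk_n2; exact Hd.
  rewrite geoF_gf in G. destruct (gf_sigma _ _ _ _ (Hw n)) as [s [Hs Es]].
  rewrite Es in G. destruct Hs; subst; lra. Qed.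

Lemma tangency_prod c p z : n2 c = 1 -> n2 p = 1 -> p <> c -> n2 z < 1 -> gf c p z = 0 ->
  dd2 z c * dd2 z p <= dd2 c p / 4.
Proof. intros Hc Hp Hpc Hz G. pose proof (tangency c p z Hc Hp Hpc Hz G) as T.
  unfold Tv in T. pose proof (dd2_pos_disk z c Hc Hz). pose proof (dd2_pos_disk z p Hp Hz).
  assert (E: (1 - n2 z)^2 * dd2 c p = 4 * (dd2 z c * dd2 z p)).
  { rewrite <- T. field. lra. }
  pose proof (n2_ge0 z). assert ((1 - n2 z)^2 <= 1) by nra.
  pose proof (dd2_ge0 c p). nra. Qed.

Lemma caseA (a b w : nat -> C) (y : nat -> R)
  (Hw : forall n, (a n = w n /\ b n = w (S n)) \/ (a n = w (S n) /\ b n = w n))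
  (Hc : forall n, n2 (w n) = 1) (Hd1 : forall n, w n <> w (S n))
  (Hd0 : forall k, w (S k) <> w 0%nat)
  (Hy : forall k, y k = X1 (rot (w (S k)) (w 0%nat)))
  (Hb : forall k, (y (S (S k)) - y k) * (y (S (S k)) - y (S k)) < 0)
  (Hno : forall d, d > 0 -> exists k, ell y k < d) :
  converges_to_ideal_point a b.
Proof.
  set (q := w 0%nat). assert (Hq: n2 q = 1) by apply Hc.
  assert (HY: forall k, Y1 (y k) = rot (w (S k)) q).
  { intro k. rewrite Hy. apply rot_Y1; [apply Hc| apply Hc| apply Hd0]. }
  assert (Hcau: Cauchy_crit y).
  { intros eps Heps. destruct (Hno (eps/2)) as [k Hk]; [lra|].
    exists k. intros n m Hn Hm. unfold R_dist.
    pose proof (y_close y Hb k n Hn). pose proof (y_close y Hb k m Hm).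
    replace (y n - y m) with ((y n - y k) - (y m - y k)) by ring.
    eapply Rle_lt_trans. apply Rabs_triang. rewrite Rabs_Ropp. lra. }
  destruct (Rcomplete.R_complete y Hcau) as [xi Hxi].
  exists (Cmult q (Y1 xi)). split.
  { unfold on_circle. rewrite Cmod_n2, n2_unrot, Hq, Y1_n2, Rmult_1_l. apply sqrt_1. }
  intros eps Heps.
  destruct (Hno (eps^2/4)) as [K HK]; [nra|].
  destruct (Hxi (eps/4)) as [N1 HN1]; [lra|].
  exists (S (max K N1)). intros n Hn z Hz.
  destruct n as [|k]; [lia|].
  assert (HkK: (K <= k)%nat) by lia. assert (HkN: (N1 <= k)%nat) by lia.
  pose proof (ell_mono y Hb K k HkK) as Hell.
  destruct (geod_w a b w Hw (S k) z Hz) as [Hz1 G].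
  assert (Hne: w (S (S k)) <> w (S k)) by (intro E; apply (Hd1 (S k)); auto).
  pose proof (tangency_prod _ _ z (Hc _) (Hc _) Hne Hz1 G) as TP.
  assert (Hcp: dd2 (w (S k)) (w (S (S k))) <= 4 * (ell y k)^2).
  { replace (dd2 (w (S k)) (w (S (S k)))) with (dd2 (rot (w (S k)) q) (rot (w (S (S k))) q))
      by (rewrite rot_dd2, Hq; ring).
    rewrite <- !HY. eapply Rle_trans; [apply Y1_dd2_le|]. unfold ell.
    rewrite <- (pow2_abs (y k - y (S k))). rewrite <- Rabs_Ropp. right. f_equal. f_equal. f_equal. ring. }
  pose proof (Rabs_pos (y (S k) - y k)). fold (ell y k) in *.
  assert (Hsmall: dd2 z (w (S k)) < eps^2/4 \/ dd2 z (w (S (S k))) < eps^2/4).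
  { destruct (Rlt_dec (dd2 z (w (S k))) (eps^2/4)) as [h|h]; [left; exact h|].
    destruct (Rlt_dec (dd2 z (w (S (S k)))) (eps^2/4)) as [h'|h']; [right; exact h'|].
    exfalso. assert (ell y k < eps^2/4) by lra.
    assert ((ell y k)^2 < (eps^2/4)^2) by nra.
    assert ((eps^2/4) * (eps^2/4) <= dd2 z (w (S k)) * dd2 z (w (S (S k)))).
    { apply Rmult_le_compat; nra. }
    nra. }
  set (zeta := Cmult q (Y1 xi)).
  assert (Hez: forall j, (N1 <= j)%nat -> dd2 (w (S j)) zeta < eps^2/4).
  { intros j Hj. replace (dd2 (w (S j)) zeta) with (dd2 (rot (w (S j)) q) (rot zeta q))
      by (rewrite rot_dd2, Hq; ring).
    unfold zeta. rewrite rot_unrot by exact Hq. rewrite <- HY.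
    eapply Rle_lt_trans; [apply Y1_dd2_le|].
    specialize (HN1 j Hj). unfold R_dist in HN1.
    rewrite <- (pow2_abs (y j - xi)). pose proof (Rabs_pos (y j - xi)). nra. }
  rewrite Cmod_minus.
  assert (Hfin: forall e, dd2 z e < eps^2/4 -> dd2 e zeta < eps^2/4 -> sqrt (dd2 z zeta) < eps).
  { intros e h1 h2. eapply Rle_lt_trans; [apply (dd2_tri z e zeta)|].
    assert (sqrt (dd2 z e) < eps/2) by (apply sqrt_lt_sq; [apply dd2_ge0| lra| nra]).
    assert (sqrt (dd2 e zeta) < eps/2) by (apply sqrt_lt_sq; [apply dd2_ge0| lra| nra]).
    lra. }
  destruct Hsmall as [h|h].
  - apply (Hfin _ h). apply Hez. lia.
  - apply (Hfin _ h). apply Hez. lia.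
Qed.

Lemma dd2_pos_neq z w : z <> w -> 0 < dd2 z w.
Proof. intro H. destruct (Rle_lt_or_eq_dec 0 (dd2 z w) (dd2_ge0 _ _)) as [h|h]; auto.
  exfalso. apply H. unfold dd2 in h. destruct z as [z1 z2], w as [w1 w2]. cbn [fst snd] in h.
  pose proof (pow2_ge_0 (z1 - w1)). pose proof (pow2_ge_0 (z2 - w2)).
  assert (h1: (z1 - w1)^2 = 0) by lra. assert (h2: (z2 - w2)^2 = 0) by lra.
  f_equal; nra. Qed.

Lemma sum_n_ps (L : nat -> R) N : sum_n L N = ps L (S N).
Proof. reflexivity. Qed.

Lemma caseB (a b v P : nat -> C) (L : nat -> R) (w : nat -> C) (y : nat -> R)
  (Hw : forall n, (a n = w n /\ b n = w (S n)) \/ (a n = w (S n) /\ b n = w n))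
  (Hc : forall n, n2 (w n) = 1) (Hd1 : forall n, w n <> w (S n))
  (Hd0 : forall k, w (S k) <> w 0%nat)
  (Hy : forall k, y k = X1 (rot (w (S k)) (w 0%nat)))
  (Hb : forall k, (y (S (S k)) - y k) * (y (S (S k)) - y (S k)) < 0)
  (Hvw : forall n, v n = w (S n))
  (HPg : forall n, geod (a n) (b n) (P n))
  (HL : forall n, horo_arc_length (v n) (P n) (P (S n)) (L n))
  (delta : R) (Hdelta : delta > 0) (Hell : forall k, delta <= ell y k) :
  exists B, forall N, sum_n L N <= B.
Proof.
  set (q := w 0%nat). assert (Hq: n2 q = 1) by apply Hc.
  assert (HY: forall k, Y1 (y k) = rot (w (S k)) q).
  { intro k. rewrite Hy. apply rot_Y1; [apply Hc| apply Hc| apply Hd0]. }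
  assert (Hv: forall n, n2 (v n) = 1) by (intro; rewrite Hvw; apply Hc).
  assert (HPd: forall n, n2 (P n) < 1) by (intro n; destruct (HPg n); apply disk_n2; auto).
  assert (AF: forall n, 0 < Tv (v n) (P n) /\ Tv (v n) (P (S n)) = Tv (v n) (P n) /\ n2 (P (S n)) < 1 /\
     L n = Rabs (Xt (v n) (P (S n)) - Xt (v n) (P n)) / Tv (v n) (P n)).
  { intro n. apply arc_formula; auto. }
  set (t := fun n => Tv (v n) (P n)).
  set (s := fun n => sqrt (dd2 (w n) (w (S n)))).
  set (E0 := fun n => sqrt (dd2 (w (S (S n))) (w n))).
  set (Mb := Rabs (y 0%nat) + Rabs (y 1%nat)).
  assert (Hyb: forall k, Rabs (y k) <= Mb) by (intro; apply y_bound; auto).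
  assert (Ht: forall n, 0 < t n) by (intro n; apply (AF n)).
  assert (Hs_pos: forall n, 0 < s n).
  { intro n. apply sqrt_lt_R0. apply dd2_pos_neq. apply Hd1. }
  set (ds := Rmin (s 0%nat) (2 * delta / (1 + Mb^2))).
  assert (Hds: 0 < ds).
  { apply Rmin_glb_lt. apply Hs_pos. apply Rdiv_lt_0_compat. lra. apply sq1_pos'. }
  assert (Hsl: forall n, ds <= s n).
  { intros [|k]. apply Rmin_l. eapply Rle_trans; [apply Rmin_r|].
    unfold s. replace (dd2 (w (S k)) (w (S (S k)))) with (dd2 (rot (w (S k)) q) (rot (w (S (S k))) q))
      by (rewrite rot_dd2, Hq; ring).
    rewrite <- !HY.
    pose proof (Y1_dd2_ge (y k) (y (S k)) Mb (Hyb k) (Hyb (S k))) as G.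
    rewrite <- (sqrt_pow2 (2 * delta / (1 + Mb ^ 2))).
    2:{ apply Rlt_le, Rdiv_lt_0_compat. lra. apply sq1_pos'. }
    apply sqrt_le_1_alt. eapply Rle_trans; [|exact G].
    specialize (Hell k). unfold ell in Hell.
    assert (delta^2 <= (y k - y (S k))^2).
    { rewrite <- (pow2_abs (y k - y (S k))). rewrite <- Rabs_Ropp.
      replace (- (y k - y (S k))) with (y (S k) - y k) by ring. nra. }
    pose proof (sq1_pos' Mb).
    replace ((2 * delta / (1 + Mb ^ 2)) ^ 2) with (4 * delta^2 / (1 + Mb^2)^2) by (field; lra).
    unfold Rdiv. apply Rmult_le_compat_r. apply Rlt_le, Rinv_0_lt_compat. nra. lra. }
  assert (HE0: forall n, 0 <= E0 n) by (intro; apply sqrt_pos).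
  assert (HE2: forall n, E0 n <= 2).
  { intro n. unfold E0. rewrite <- (sqrt_pow2 2) by lra. apply sqrt_le_1_alt.
    pose proof (dd2_circle_le4 _ _ (Hc (S (S n))) (Hc n)). lra. }
  assert (HES: forall k, E0 (S k) <= 2 * skip y k).
  { intro k. unfold E0.
    replace (dd2 (w (S (S (S k)))) (w (S k))) with (dd2 (rot (w (S (S (S k)))) q) (rot (w (S k)) q))
      by (rewrite rot_dd2, Hq; ring).
    rewrite <- !HY. unfold skip.
    rewrite <- (sqrt_pow2 (2 * Rabs (y (S (S k)) - y k))) by (pose proof (Rabs_pos (y (S (S k)) - y k)); lra).
    apply sqrt_le_1_alt. eapply Rle_trans; [apply Y1_dd2_le|].
    rewrite Rpow_mult_distr, pow2_abs. lra. }
  set (Eb := 2 + 2 * ell y 0%nat).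
  assert (HEb: forall N, ps E0 N <= Eb).
  { intros [|N]. simpl. unfold Eb. pose proof (Rabs_pos (y 1%nat - y 0%nat)). unfold ell. lra.
    rewrite ps_shift. pose proof (skip_sum y Hb N).
    assert (ps (fun k => E0 (S k)) N <= ps (fun k => 2 * skip y k) N) by (apply ps_le; exact HES).
    rewrite ps_scal in H0. pose proof (HE2 0%nat). unfold Eb.
    assert (0 <= ell y N) by apply Rabs_pos. lra. }
  assert (Hrec: forall n, t n * t (S n) * (s (S n))^2 = 4).
  { intro n. destruct (geod_w a b w Hw (S n) (P (S n)) (HPg (S n))) as [Hz G].
    assert (Hne: w (S (S n)) <> w (S n)) by (intro E; apply (Hd1 (S n)); auto).
    pose proof (tangency _ _ _ (Hc _) (Hc _) Hne Hz G) as T.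
    unfold t, s. rewrite pow2_sqrt by apply dd2_ge0.
    destruct (AF n) as [_ [E1 _]]. rewrite <- E1. rewrite !Hvw. exact T. }
  assert (Hrec2: forall n, t (S (S n)) * (s (S (S n)))^2 = t n * (s (S n))^2).
  { intro n. pose proof (Hrec n). pose proof (Hrec (S n)). pose proof (Ht (S n)).
    apply (Rmult_eq_reg_l (t (S n))); [|lra]. lra. }
  assert (Hstep: forall n, s (S (S n)) <= s (S n) + E0 (S n)).
  { intro n. unfold s, E0. eapply Rle_trans; [apply (dd2_tri _ (w (S n)))|].
    rewrite (dd2_sym (w (S (S n))) (w (S n))), (dd2_sym (w (S n)) (w (S (S (S n))))). lra. }
  set (m0 := Rmin (ln (t 0%nat)) (ln (t 1%nat))).
  assert (Hln: forall n, m0 - (2/ds) * ps E0 n <= ln (t n) /\ m0 - (2/ds) * ps E0 (S n) <= ln (t (S n))).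
  { assert (Hpsn: forall n, 0 <= ps E0 n) by (intro; apply ps_nonneg; exact HE0).
    assert (H2ds: 0 < 2/ds) by (apply Rdiv_lt_0_compat; lra).
    induction n.
    - split.
      + simpl. unfold m0. rewrite Rmult_0_r. pose proof (Rmin_l (ln (t 0%nat)) (ln (t 1%nat))). lra.
      + unfold m0. pose proof (Rmin_r (ln (t 0%nat)) (ln (t 1%nat))). pose proof (Hpsn 1%nat). nra.
    - destruct IHn as [I1 I2]. split; auto.
      assert (Et: t (S (S n)) = t n * (s (S n) / s (S (S n)))^2).
      { pose proof (Hrec2 n). pose proof (Hs_pos (S (S n))).
        apply (Rmult_eq_reg_r ((s (S (S n)))^2)). rewrite H. field. lra.
        apply pow_nonzero. lra. }
      pose proof (Hs_pos (S n)) as s1. pose proof (Hs_pos (S (S n))) as s2.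
      assert (Hr: 0 < s (S n) / s (S (S n))) by (apply Rdiv_lt_0_compat; lra).
      assert (El: ln (t (S (S n))) = ln (t n) + 2 * ln (s (S n) / s (S (S n)))).
      { rewrite Et, ln_mult, ln_pow by (auto; apply pow_lt; auto). simpl (INR 2). ring. }
      pose proof (ln_lower _ Hr) as LL.
      assert (LL2: - E0 (S n) / ds <= 1 - 1 / (s (S n) / s (S (S n)))).
      { replace (1 - 1 / (s (S n) / s (S (S n)))) with ((s (S n) - s (S (S n))) / s (S n)) by (field; lra).
        pose proof (Hstep n). pose proof (Hsl (S n)). pose proof (HE0 (S n)).
        unfold Rdiv. apply Rle_trans with (- E0 (S n) * / s (S n)).
        - assert (/ s (S n) <= / ds) by (apply Rinv_le_contravar; lra).
          pose proof (Rinv_0_lt_compat _ s1). nra.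
        - apply Rmult_le_compat_r. apply Rlt_le, Rinv_0_lt_compat; lra. lra. }
      rewrite El. rewrite !ps_S.
      pose proof (HE0 n).
      replace (2 / ds * (ps E0 n + E0 n + E0 (S n))) with (2 / ds * ps E0 n + 2 / ds * E0 n + 2 * (E0 (S n) / ds)) by (field; lra).
      assert (0 <= 2/ds * E0 n) by (apply Rmult_le_pos; lra).
      replace (- E0 (S n) / ds) with (- (E0 (S n) / ds)) in LL2 by (field; lra).
      lra. }
  set (lam := m0 - (2/ds) * Eb).
  assert (Htl: forall n, exp lam <= t n).
  { intro n. rewrite <- (exp_ln (t n)) by apply Ht. apply exp_mono.
    destruct (Hln n) as [h _]. pose proof (HEb n).
    assert (0 < 2/ds) by (apply Rdiv_lt_0_compat; lra).
    unfold lam. nra. }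
  set (C0 := 2 / (ds^2 * exp lam)).
  assert (HLb: forall n, L n <= C0 * E0 n).
  { intro n. destruct (AF n) as [_ [_ [_ EL]]]. rewrite EL. change (Tv (v n) (P n)) with (t n).
    destruct (geod_w a b w Hw (S n) (P (S n)) (HPg (S n))) as [Hz1 G1].
    destruct (geod_w a b w Hw n (P n) (HPg n)) as [Hz0 G0].
    rewrite gf_swap in G0. assert (G0': gf (w (S n)) (w n) (P n) = 0) by lra.
    assert (Hne1: w (S (S n)) <> w (S n)) by (intro E; apply (Hd1 (S n)); auto).
    assert (Hne0: w n <> w (S n)) by apply Hd1.
    rewrite !Hvw.
    rewrite (Xt_geo _ _ _ (Hc _) (Hc _) Hne1 Hz1 G1).
    rewrite (Xt_geo _ _ _ (Hc _) (Hc _) Hne0 Hz0 G0').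
    pose proof (X1_diff _ _ _ (Hc (S n)) (Hc (S (S n))) (Hc n) Hne1 Hne0) as XD.
    set (dX := X1 (rot (w (S (S n))) (w (S n))) - X1 (rot (w n) (w (S n)))) in *.
    assert (Ea: dd2 (w (S (S n))) (w (S n)) = (s (S n))^2).
    { unfold s. rewrite pow2_sqrt by apply dd2_ge0. apply dd2_sym. }
    assert (Eb': dd2 (w n) (w (S n)) = (s n)^2) by (unfold s; rewrite pow2_sqrt by apply dd2_ge0; reflexivity).
    assert (Ec: dd2 (w (S (S n))) (w n) = (E0 n)^2) by (unfold E0; rewrite pow2_sqrt by apply dd2_ge0; reflexivity).
    rewrite Ea, Eb', Ec in XD.
    pose proof (Hs_pos n). pose proof (Hs_pos (S n)). pose proof (HE0 n).
    assert (Habs: Rabs dX = 2 * E0 n / (s n * s (S n))).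
    { apply Rsqr_inj. apply Rabs_pos. unfold Rdiv. apply Rmult_le_pos. lra. apply Rlt_le, Rinv_0_lt_compat. nra.
      rewrite <- Rsqr_abs. unfold Rsqr. apply (Rmult_eq_reg_r ((s (S n))^2 * (s n)^2)).
      2:{ apply Rgt_not_eq. apply Rmult_lt_0_compat; apply pow_lt; lra. }
      replace (dX * dX * ((s (S n))^2 * (s n)^2)) with (dX ^ 2 * s (S n) ^ 2 * s n ^ 2) by ring.
      rewrite XD. field. lra. }
    rewrite Habs. pose proof (Ht n) as Htn. pose proof (Htl n).
    pose proof (Hsl n). pose proof (Hsl (S n)). pose proof (exp_pos lam).
    unfold C0.
    replace (2 * E0 n / (s n * s (S n)) / t n) with (2 * E0 n * / (s n * s (S n) * t n)) by (field; lra).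
    replace (2 / (ds ^ 2 * exp lam) * E0 n) with (2 * E0 n * / (ds ^ 2 * exp lam)) by (field; lra).
    apply Rmult_le_compat_l. lra.
    apply Rinv_le_contravar. apply Rmult_lt_0_compat. nra. lra.
    replace (ds ^ 2 * exp lam) with ((ds * ds) * exp lam) by ring.
    apply Rmult_le_compat. nra. lra. apply Rmult_le_compat; lra. lra. }
  exists (C0 * Eb). intro N. rewrite sum_n_ps.
  eapply Rle_trans. apply (ps_le L (fun n => C0 * E0 n)). exact HLb.
  rewrite ps_scal. apply Rmult_le_compat_l.
  unfold C0. apply Rlt_le, Rdiv_lt_0_compat. lra. apply Rmult_lt_0_compat. nra. apply exp_pos.
  apply HEb.
Qed.

Theorem propositionA1
  (a b : nat -> C) (v : nat -> C) (P : nat -> C) (L : nat -> R)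
  (Hcirc : forall n, on_circle (a n) /\ on_circle (b n))
  (Hdist : forall n, a n <> b n)
  (Hnest : forall n, (1 <= n)%nat ->
     ((forall z, geod (a (n - 1)%nat) (b (n - 1)%nat) z -> side_pos (a n) (b n) z) /\
      (forall z, geod (a (n + 1)%nat) (b (n + 1)%nat) z -> side_neg (a n) (b n) z)) \/
     ((forall z, geod (a (n - 1)%nat) (b (n - 1)%nat) z -> side_neg (a n) (b n) z) /\
      (forall z, geod (a (n + 1)%nat) (b (n + 1)%nat) z -> side_pos (a n) (b n) z)))
  (Hvert : forall n, is_endpoint (a n) (b n) (v n) /\
                     is_endpoint (a (S n)) (b (S n)) (v n))
  (Hthree : forall i j k p, (i < j)%nat -> (j < k)%nat ->
     ~ (is_endpoint (a i) (b i) p /\ is_endpoint (a j) (b j) p /\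
        is_endpoint (a k) (b k) p))
  (HP0 : geod (a 0%nat) (b 0%nat) (P 0%nat))
  (HPn : forall n, geod (a (S n)) (b (S n)) (P (S n)) /\
                   on_horocycle (v n) (P n) (P (S n)))
  (HL : forall n, horo_arc_length (v n) (P n) (P (S n)) (L n)) :
  converges_to_ideal_point a b <-> is_lim_seq (sum_n L) p_infty.
Proof.
  assert (Hab: forall n, n2 (a n) = 1 /\ n2 (b n) = 1).
  { intro n. destruct (Hcirc n). split; apply circle_n2; auto. }
  assert (Hv: forall n, n2 (v n) = 1).
  { intro n. destruct (proj1 (Hvert n)) as [h|h]; rewrite h; apply Hab. }
  assert (HPg: forall n, geod (a n) (b n) (P n)).
  { intros [|n]. exact HP0. apply HPn. }
  assert (HPd: forall n, n2 (P n) < 1).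
  { intro n. destruct (HPg n). apply disk_n2; auto. }
  split.
  { apply forward with (v := v) (P := P); auto. }
  intro Hlim.
  assert (Hu: exists u, (a 0%nat = u /\ b 0%nat = v 0%nat) \/ (a 0%nat = v 0%nat /\ b 0%nat = u)).
  { destruct (proj1 (Hvert 0%nat)) as [h|h].
    - exists (b 0%nat). right. split; auto.
    - exists (a 0%nat). left. split; auto. }
  destruct Hu as [u Hu].
  set (w := wseq u v).
  pose proof (w_struct a b v u Hdist Hvert Hthree Hu) as Hw. fold w in Hw.
  assert (Hc: forall n, n2 (w n) = 1).
  { intro n. destruct (Hw n) as [[h1 h2]|[h1 h2]]; rewrite <- ?h1, <- ?h2; apply Hab. }
  assert (Hd1: forall n, w n <> w (S n)).
  { intros n E. apply (Hdist n). destruct (Hw n) as [[h1 h2]|[h1 h2]]; congruence. }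
  assert (End1: forall n, is_endpoint (a n) (b n) (w n)).
  { intro n. unfold is_endpoint. destruct (Hw n) as [[h1 h2]|[h1 h2]]; [left|right]; auto. }
  assert (End2: forall n, is_endpoint (a n) (b n) (w (S n))).
  { intro n. unfold is_endpoint. destruct (Hw n) as [[h1 h2]|[h1 h2]]; [right|left]; auto. }
  assert (Hd2: forall n, w n <> w (S (S n))).
  { intros n E. apply (Hthree n (S n) (S (S n)) (w n)); try lia.
    split; [apply End1|]. split; [rewrite E; apply End2| rewrite E; apply End1]. }
  assert (Hd0: forall k, w (S k) <> w 0%nat).
  { intros [|k] E. apply (Hd1 0%nat). auto.
    apply (Hthree 0%nat (S k) (S (S k)) (w 0%nat)); try lia.
    split; [apply End1|]. split; [rewrite <- E; apply End2| rewrite <- E; apply End1]. }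
  pose proof (nest_sep a b w Hw Hc Hd1 Hnest) as Hsep.
  pose proof (xbetween w Hc Hd1 Hd2 Hd0 Hsep) as Hb. simpl in Hb.
  set (y := fun k => X1 (rot (w (S k)) (w 0%nat))) in Hb.
  assert (Hy: forall k, y k = X1 (rot (w (S k)) (w 0%nat))) by reflexivity.
  assert (Hvw: forall n, v n = w (S n)) by reflexivity.
  destruct (classic (exists d, d > 0 /\ forall k, d <= ell y k)) as [[d [Hd Hell]]|Hno].
  - exfalso. destruct (caseB a b v P L w y Hw Hc Hd1 Hd0 Hy Hb Hvw HPg HL d Hd Hell) as [B HB].
    apply is_lim_seq_spec in Hlim. destruct (Hlim B) as [N HN].
    specialize (HN N (Nat.le_refl _)). specialize (HB N). lra.
  - apply (caseA a b w y Hw Hc Hd1 Hd0 Hy Hb).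
    intros d Hd. destruct (classic (exists k, ell y k < d)) as [h|h]; auto.
    exfalso. apply Hno. exists d. split; auto. intro k.
    destruct (Rle_dec d (ell y k)) as [h'|h']; auto. exfalso. apply h. exists k. lra.
Qed.
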